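(* Under the hypotheses of the previous lemma (reals $p_j\ge0$, $x_j$, $x_{\{j\}\cup\{j'\}}$ with nonnegative symmetric entries, $x_{\{j\}\cup\{j\}}=x_j\ge 0$, and PSD matrix $X$ with $X_{0,0}=1$, $X_{0,j}=x_j$, $X_{j,j'}=x_{\{j\}\cup\{j'\}}$), let $G\subseteq\{1,\dots,n'\}$, $\bar G=\{1,\dots,n'\}\setminus G$, $L=\sum_{j=1}^{n'}x_jp_j$, $Q=\sum_{j=1}^{n'}x_jp_j^2$, $\bar L=\sum_{j\in\bar G}x_jp_j$, $\bar Q=\sum_{j\in\bar G}x_jp_j^2$, and $R=\sum_{j=1}^{n'}p_j\big(p_1x_{\{j\}\cup\{1\}}+\dots+p_jx_{\{j\}\cup\{j\}}\big)$. Then $R\ge Q$, $R\ge \tfrac12(Q+L^2)$, and $R\ge \tfrac12(\bar Q+Q+(L-\bar L)^2)$. *)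

(* Defs.v *)
From HB Require Import structures.
From mathcomp Require Import all_boot all_order all_algebra.
Set Implicit Arguments. Unset Strict Implicit. Unset Printing Implicit Defensive.
Import Order.TTheory GRing.Theory Num.Theory.
Local Open Scope ring_scope.

Definition psd (R : realFieldType) (m : nat) (X : 'M[R]_m) : Prop :=
  X^T = X /\ forall v : 'cV[R]_m, 0 <= (v^T *m X *m v) 0 0.

(* Main.v *)
Require Import Defs.
From HB Require Import structures.
From mathcomp Require Import all_boot all_order all_algebra.
From mathcomp Require Import ring lra.
Import Order.TTheory GRing.Theory Num.Theory.
Local Open Scope ring_scope.

Lemma qform (R : realFieldType) m (X : 'M[R]_m) (v : 'I_m -> R) :
  ((\col_i v i)^T *m X *m (\col_i v i)) 0 0 = \sum_k \sum_i v i * X i k * v k.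
Proof.
rewrite mxE; apply: eq_bigr => k _; rewrite mxE mulr_suml; apply: eq_bigr => i _.
by rewrite !mxE.
Qed.

Lemma quad (R : realFieldType) (n : nat) (q x : 'I_n -> R) (y : 'I_n -> 'I_n -> R) (X : 'M[R]_n.+1)
    (hX : psd X)
    (hX00 : X ord0 ord0 = 1)
    (hX0j : forall j, X ord0 (lift ord0 j) = x j)
    (hXjj : forall j j', X (lift ord0 j) (lift ord0 j') = y j j') :
  (\sum_i x i * q i) ^+ 2 <= \sum_i \sum_j q i * q j * y i j.
Proof.
set c := \sum_i x i * q i.
have Xs : forall i j, X i j = X j i by move=> i j; rewrite -{1}hX.1 mxE.
have := hX.2 (\col_(i < n.+1) if unlift ord0 i is Some j then q j else - c).
rewrite qform big_ord_recl big_ord_recl unlift_none hX00.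
under eq_bigr => k _ do rewrite liftK Xs hX0j.
under [X in _ + X]eq_bigr => k _ do (rewrite big_ord_recl unlift_none liftK hX0j; under eq_bigr => i _ do rewrite liftK hXjj).
have E : \sum_(i < n) q i * x i = c by apply: eq_bigr => i _; rewrite mulrC.
rewrite -mulr_suml E big_split /=.
have -> : \sum_(i < n) - c * x i * q i = - c * c by rewrite mulr_sumr; apply: eq_bigr => i _; rewrite mulrA.
set S := \sum_(i < n) \sum_(j < n) _.
set S2 := \sum_(i < n) \sum_(j < n) _.
have -> : S = S2.
  rewrite /S /S2 exchange_big; apply: eq_bigr => i _; apply: eq_bigr => j _.
  by rewrite mulrAC.
move=> H; rewrite -subr_ge0; apply: le_trans H _; rewrite le_eqVlt; apply/orP; left; apply/eqP.
by rewrite /= expr2; ring.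
Qed.

Lemma diag_le (R : realFieldType) n (f : 'I_n -> 'I_n -> R) :
  (forall i j, 0 <= f i j) -> \sum_(i < n) f i i <= \sum_i \sum_j f i j.
Proof.
move=> hf; apply: ler_sum => i _; rewrite (bigD1 i) //= lerDl.
by apply: sumr_ge0 => j _.
Qed.

Lemma tri (R : realFieldType) n (f : 'I_n -> 'I_n -> R) :
  (forall i j, f i j = f j i) ->
  2 * \sum_(i < n) \sum_(j < n | (j <= i)%N) f i j = \sum_(i < n) f i i + \sum_i \sum_j f i j.
Proof.
move=> hs.
have E1 : forall i : 'I_n, \sum_(j < n | (j <= i)%N) f i j = f i i + \sum_(j < n | (j < i)%N) f i j.
  move=> i; rewrite (bigD1 i) //=; congr (_ + _); apply: eq_bigl => j.
  by rewrite -val_eqE /=; case: ltngtP.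
have E2 : forall i : 'I_n, \sum_j f i j = f i i + \sum_(j < n | (j < i)%N) f i j + \sum_(j < n | (i < j)%N) f i j.
  move=> i; rewrite (bigD1 i) //= (bigID (fun j : 'I_n => (j < i)%N)) /= addrA; congr (_ + _ + _).
    by apply: eq_bigl => j; rewrite -val_eqE /=; case: ltngtP.
  by apply: eq_bigl => j; rewrite -val_eqE /=; case: ltngtP.
have E3 : \sum_(i < n) \sum_(j < n | (i < j)%N) f i j = \sum_(i < n) \sum_(j < n | (j < i)%N) f i j.
  under eq_bigr => i _ do rewrite big_mkcond.
  rewrite exchange_big; apply: eq_bigr => i _; rewrite [RHS]big_mkcond; apply: eq_bigr => j _.
  by rewrite hs.
under eq_bigr => i _ do rewrite E1.
under [X in _ = _ + X]eq_bigr => i _ do rewrite E2.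
rewrite !big_split /= E3; ring.
Qed.

Theorem corollary1 (R : realFieldType) (n : nat)
    (p x : 'I_n -> R) (y : 'I_n -> 'I_n -> R) (X : 'M[R]_n.+1)
    (G : {set 'I_n})
    (hp : forall j, 0 <= p j)
    (hx : forall j, 0 <= x j)
    (hy : forall j j', 0 <= y j j')
    (hysym : forall j j', y j j' = y j' j)
    (hydiag : forall j, y j j = x j)
    (hX : psd X)
    (hX00 : X ord0 ord0 = 1)
    (hX0j : forall j, X ord0 (lift ord0 j) = x j)
    (hXjj : forall j j', X (lift ord0 j) (lift ord0 j') = y j j') :
  let L := \sum_(j < n) x j * p j in
  let Q := \sum_(j < n) x j * p j ^+ 2 in
  let Lbar := \sum_(j in ~: G) x j * p j in
  let Qbar := \sum_(j in ~: G) x j * p j ^+ 2 in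
  let RR := \sum_(j < n) p j * (\sum_(j' < n | (j' <= j)%N) p j' * y j j') in
  [/\ Q <= RR,
      (Q + L ^+ 2) / 2 <= RR
    & (Qbar + Q + (L - Lbar) ^+ 2) / 2 <= RR].
Proof.
move=> L Q Lbar Qbar RR.
pose f i j := p i * p j * y i j.
pose S := \sum_(i < n) \sum_(j < n) f i j.
have Hf0 : forall i j, 0 <= f i j by move=> i j; rewrite /f !mulr_ge0.
have Hdiag : \sum_(i < n) f i i = Q.
  by apply: eq_bigr => i _; rewrite /f hydiag expr2; ring.
have HR : 2 * RR = Q + S.
  rewrite -Hdiag /S -tri; last by move=> i j; rewrite /f; congr (_ * _); [apply: mulrC | apply: hysym].
  congr (_ * _); apply: eq_bigr => i _; rewrite mulr_sumr; apply: eq_bigr => j _.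
  by rewrite /f mulrA.
have HQS : Q <= S by rewrite -Hdiag; apply: diag_le.
have HLS : L ^+ 2 <= S by exact: (@quad _ _ p x y X hX hX00 hX0j hXjj).
pose qG j := if j \in G then p j else 0.
have HLG : L - Lbar = \sum_(i < n) x i * qG i.
  rewrite /L (bigID (mem G)) /= /Lbar.
  have -> : \sum_(j in ~: G) x j * p j = \sum_(i < n | i \notin G) x i * p i.
    by apply: eq_bigl => j; rewrite in_setC.
  rewrite addrK big_mkcond; apply: eq_bigr => i _; rewrite /qG.
  by case: (i \in G) => //; rewrite mulr0.
pose SG := \sum_(i < n) \sum_(j < n) qG i * qG j * y i j.
have HLSG : (L - Lbar) ^+ 2 <= SG by rewrite HLG; exact: (@quad _ _ qG x y X hX hX00 hX0j hXjj).
have HQb : Qbar <= S - SG.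
  pose g i j := f i j - qG i * qG j * y i j.
  have -> : S - SG = \sum_(i < n) \sum_(j < n) g i j.
    rewrite /S /SG -sumrB; apply: eq_bigr => i _; by rewrite -sumrB.
  have -> : Qbar = \sum_(i < n) g i i.
    rewrite /Qbar /g big_mkcond; apply: eq_bigr => i _; rewrite /f /qG in_setC hydiag.
    by case: (i \in G) => /=; rewrite ?expr2; ring.
  apply: diag_le => i j; rewrite /g /f /qG.
  case: (i \in G); case: (j \in G); rewrite ?subrr ?mul0r ?mulr0 ?subr0 //.
  all: try by rewrite ?mul0r ?subr0; apply: Hf0.
have HSG0 : 0 <= SG - SG by rewrite subrr.
split; lra.
Qed.
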